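(* Let $G$ be an instance of the rank-maximal matchings problem (with last-resort posts added), let $M$ be a rank-maximal matching in $G$, and let $C$ be a directed cycle in the switching graph $G_M$. Then $w(C)=0$.
   Context: An instance is a bipartite graph $G=(\mathcal{A}\cup\mathcal{P},E)$, $\mathcal{A}$ a set of applicants, $\mathcal{P}$ a set of posts, with $E=E_1\cup\dots\cup E_r$ a disjoint union; $(a,p)\in E_i$ means $p$ is an $i$-th choice of $a$, written $\mathrm{rank}(a,p)=i$ (ties allowed). Each applicant $a$ is additionally given its own dummy last-resort post $\ell(a)$ with $(a,\ell(a))\in E_{r+1}$; the resulting instance with ranks $1,\dots,r+1$ is still called $G$. The signature of a matching $M$ is $(x_1,\dots,x_{r+1})$, $x_i$ the number of applicants matched along rank-$i$ edges; $M$ is rank-maximal if its signature is lexicographically maximum. Even/odd/unreachable: given a bipartite graph and a maximum matching $N$, a vertex is even (odd) if there is an even (odd) length $N$-alternating path from an $N$-unmatched vertex to it, unreachable otherwise; independent of the choice of $N$. Irving et al.'s algorithm: $G'_1=(\mathcal{A}\cup\mathcal{P},E_1)$, $M_1$ a maximum matching. For $i=1,\dots,r$: let $\mathcal{E}_i,\mathcal{O}_i,\mathcal{U}_i$ be the even/odd/unreachable vertices of $G'_i$; delete all edges of rank $>i$ incident to $\mathcal{O}_i\cup\mathcal{U}_i$; delete from $G'_i$ edges joining $\mathcal{O}_i$ to $\mathcal{O}_i\cup\mathcal{U}_i$; add the remaining edges of $E_{i+1}$ to get $G'_{i+1}$; let $M_{i+1}$ be a maximum matching of $G'_{i+1}$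 augmenting $M_i$. With $\mathcal{E}_{r+1},\mathcal{O}_{r+1},\mathcal{U}_{r+1}$ the even/odd/unreachable vertices of $G'_{r+1}$, the reduced graph $G'$ is $G'_{r+1}$ minus the edges joining $\mathcal{O}_{r+1}$ to $\mathcal{O}_{r+1}\cup\mathcal{U}_{r+1}$ (independent of choices). Switching graph: for a rank-maximal matching $M$ (which matches all applicants), $G_M$ is the directed graph on $\mathcal{P}$ with an edge $(p_i,p_j)$ whenever some applicant $a$ has $(a,p_i)\in M$ and $(a,p_j)\in E(G')$, with weight $w(p_i,p_j)=\mathrm{rank}(a,p_j)-\mathrm{rank}(a,p_i)$; the weight $w(C)$ of a cycle is the sum of its edge weights. *)

(* Defs.v *)
From mathcomp Require Import all_boot all_order all_algebra.
Set Implicit Arguments. Unset Strict Implicit. Unset Printing Implicit Defensive.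
Import GRing.Theory Num.Theory.

Section Bipartite.
Variables (A Q : finType).

Definition graph := A -> Q -> Prop.

Definition is_matching (H : graph) (N : {set A * Q}) : Prop :=
  [/\ (forall e, e \in N -> H e.1 e.2),
      (forall e f, e \in N -> f \in N -> e.1 = f.1 -> e = f) &
      (forall e f, e \in N -> f \in N -> e.2 = f.2 -> e = f)].

Definition is_max_matching (H : graph) (N : {set A * Q}) : Prop :=
  is_matching H N /\ forall N', is_matching H N' -> #|N'| <= #|N|.

Definition vadj (H : graph) (u v : A + Q) : Prop :=
  match u, v with
  | inl a, inr q => H a q
  | inr q, inl a => H a q
  | _, _ => False
  end.

Definition vinN (N : {set A * Q}) (u v : A + Q) : Prop :=
  vadj (fun a q => (a, q) \in N) u v.

Definition unmatched (N : {set A * Q}) (v : A + Q) : Prop :=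
  forall u, ~ vinN N v u.

(* v0 :: s is a (simple) N-alternating path in H whose first edge is not in N *)
Definition alt_path (H : graph) (N : {set A * Q}) (v0 : A + Q)
    (s : seq (A + Q)) : Prop :=
  uniq (v0 :: s) /\
  forall i, i < size s ->
    vadj H (nth v0 (v0 :: s) i) (nth v0 (v0 :: s) i.+1) /\
    (vinN N (nth v0 (v0 :: s) i) (nth v0 (v0 :: s) i.+1) <-> odd i).

(* even / odd / unreachable vertices (w.r.t. a maximum matching; the notion is
   independent of the chosen maximum matching) *)
Definition even_v (H : graph) (v : A + Q) : Prop :=
  exists N, is_max_matching H N /\
    exists v0 s, [/\ unmatched N v0, alt_path H N v0 s,
                     last v0 s = v & ~~ odd (size s)].

Definition odd_v (H : graph) (v : A + Q) : Prop :=
  exists N, is_max_matching H N /\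
    exists v0 s, [/\ unmatched N v0, alt_path H N v0 s,
                     last v0 s = v & odd (size s)].

Definition unreach_v (H : graph) (v : A + Q) : Prop :=
  ~ even_v H v /\ ~ odd_v H v.

Definition joins_OOU (H : graph) (a : A) (q : Q) : Prop :=
  (odd_v H (inl a) /\ (odd_v H (inr q) \/ unreach_v H (inr q))) \/
  (odd_v H (inr q) /\ (odd_v H (inl a) \/ unreach_v H (inl a))).

End Bipartite.

(* Applicants A, original posts P, ranks rk a p in 1..r (0 = no edge).
   Posts of the extended instance are P + A, inr a being the last-resort
   post l(a), with rank r+1 for a only. *)
Definition frk (A P : finType) (r : nat) (rk : A -> P -> nat) (a : A)
    (q : (P + A)%type) : nat :=
  match q with
  | inl p => rk a p
  | inr b => if a == b then r.+1 else 0
  end.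

Definition Gedge (A P : finType) (r : nat) (rk : A -> P -> nat) : graph A (P + A)%type :=
  fun a q => 0 < frk r rk a q.

Definition signature (A P : finType) (r : nat) (rk : A -> P -> nat)
    (M : {set A * (P + A)%type}) (i : nat) : nat :=
  #|[set e in M | frk r rk e.1 e.2 == i]|.

Definition lex_lt (n : nat) (s t : nat -> nat) : Prop :=
  exists i, [/\ 1 <= i <= n, (forall j, 1 <= j < i -> s j = t j) & s i < t i].

Definition rank_maximal (A P : finType) (r : nat) (rk : A -> P -> nat)
    (M : {set A * (P + A)%type}) : Prop :=
  is_matching (Gedge r rk) M /\
  ~ exists M', is_matching (Gedge r rk) M' /\
               lex_lt r.+1 (signature r rk M) (signature r rk M').

(* Irving et al.'s algorithm.  irving_stage i = (G'_{i+1}, alive_i), where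
   alive_i is the set of edges not deleted in stages 1..i. *)
Fixpoint irving_stage (A P : finType) (r : nat) (rk : A -> P -> nat) (i : nat)
  : graph A (P + A)%type * graph A (P + A)%type :=
  match i with
  | 0 => (fun a q => frk r rk a q = 1, fun _ _ => True)
  | i'.+1 =>
      let HAl := irving_stage r rk i' in
      let H := HAl.1 in
      let Al := HAl.2 in
      let OU := fun v => odd_v H v \/ unreach_v H v in
      (* stage i := i'.+1 : delete edges of rank > i incident to O_i \cup U_i *)
      let Al' := fun a q =>
         Al a q /\ ~ (i'.+1 < frk r rk a q /\ (OU (inl a) \/ OU (inr q))) in
      ((fun a q => (H a q /\ ~ joins_OOU H a q) \/
                   (frk r rk a q = i'.+2 /\ Al' a q)),
       Al')
  end.

Definition reduced_graph (A P : finType) (r : nat) (rk : A -> P -> nat)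
  : graph A (P + A)%type :=
  let H := (irving_stage r rk r).1 in
  fun a q => H a q /\ ~ joins_OOU H a q.

(* edge (p, q) of the switching graph G_M, realised by applicant a *)
Definition sw_edge (A P : finType) (r : nat) (rk : A -> P -> nat)
    (M : {set A * (P + A)%type}) (a : A) (p q : (P + A)%type) : Prop :=
  (a, p) \in M /\ reduced_graph r rk a q.

Definition sw_weight (A P : finType) (r : nat) (rk : A -> P -> nat)
    (a : A) (p q : (P + A)%type) : int :=
  ((frk r rk a q)%:Z - (frk r rk a p)%:Z)%R.

(* Main.v *)
Require Import Defs.
From mathcomp Require Import all_boot all_order all_algebra.
From mathcomp Require Import zify.
From Stdlib Require Import Classical ClassicalEpsilon.
Import GRing.Theory Num.Theory.


Section Gen.
Set Implicit Arguments. Unset Strict Implicit.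
Context {A Q : finType}.
Implicit Types (H : graph A Q) (N Z X : {set A * Q}) (u v w : (A + Q)%type).

Definition side (v : (A + Q)%type) : bool := if v is inl _ then true else false.
Definition touch (e : A * Q) (v : (A + Q)%type) : Prop := v = inl e.1 \/ v = inr e.2.
Definition mkE (u w : (A + Q)%type) : option (A * Q) :=
  match u, w with
  | inl a, inr q => Some (a, q)
  | inr q, inl a => Some (a, q)
  | _, _ => None
  end.

Lemma vadjE H u w : vadj H u w <-> exists e, mkE u w = Some e /\ H e.1 e.2.
Proof.
case: u => [a|q]; case: w => [b|p] /=; split => //; try by case=> e [].
- by move=> h; exists (a, p).
- by case=> e [[<-]].
- by move=> h; exists (b, q).
- by case=> e [[<-]].
Qed.

Lemma vinNE N u w : vinN N u w <-> exists e, mkE u w = Some e /\ e \in N.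
Proof. rewrite /vinN vadjE; split; case=> [[a q]] [h1 h2]; by exists (a, q). Qed.

Lemma mkE_touch {u w e} : mkE u w = Some e -> [/\ touch e u, touch e w & side u != side w].
Proof.
by case: u => [a|q]; case: w => [b|p] //= [<-]; split => //; rewrite /touch /=; auto.
Qed.

Lemma touch_mkE {u w e} : touch e u -> touch e w -> side u != side w -> mkE u w = Some e.
Proof.
case: e => a q; rewrite /touch /= => t1 t2.
by case: t1 => ->; case: t2 => ->.
Qed.

Lemma mkE_other {u w w' e} : mkE u w = Some e -> mkE u w' = Some e -> w = w'.
Proof.
case: u => [a|q]; case: w => [b|p]; case: w' => [b'|p'] //= [<-] [];
  by move=> *; subst.
Qed.

Lemma mkE_touch3 {u w e z} : mkE u w = Some e -> touch e z -> z = u \/ z = w.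
Proof.
case: u => [a|q]; case: w => [b|p] //= [<-]; rewrite /touch /= => [[]->]; auto.
Qed.

Lemma vadj_side H u w : vadj H u w -> side u != side w.
Proof. by case: u; case: w. Qed.

Lemma vinN_vadj H N u w : is_matching H N -> vinN N u w -> vadj H u w.
Proof.
move=> [hH _ _]; case: u => [a|q]; case: w => [b|p] //= h; exact: (hH _ h).
Qed.

Definition tmatch N := forall e f v, e \in N -> f \in N -> touch e v -> touch f v -> e = f.

Lemma matchingT H N : is_matching H N -> tmatch N.
Proof.
move=> [_ h1 h2] e f v he hf [->|->] []; try by [].
- by case=> hh; apply: h1.
- by case=> hh; apply: h2.
Qed.

Lemma matchingI H N : (forall e, e \in N -> H e.1 e.2) -> tmatch N -> is_matching H N.
Proof.
move=> hH hT; split => // e f he hf heq.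
- by apply: (hT e f (inl e.1)) => //; [left | left; rewrite heq].
- by apply: (hT e f (inr e.2)) => //; [right | right; rewrite heq].
Qed.

Lemma unmatchedE N v : unmatched N v <-> forall e, e \in N -> ~ touch e v.
Proof.
split.
- move=> h [a q] he t; case: t => /= hv; subst v.
  + by apply: (h (inr q)).
  + by apply: (h (inl a)).
- move=> h u /vinNE [e [hm he]]; have [t _ _] := mkE_touch hm; exact: (h e he t).
Qed.

Lemma matchedE N v : ~ unmatched N v <-> exists2 e, e \in N & touch e v.
Proof.
rewrite unmatchedE; split.
- move=> h; apply: NNPP => hn; apply: h => e he t; apply: hn; by exists e.
- by case=> e he t h; apply: (h e he t).
Qed.

Definition asb (P : Prop) : bool := if excluded_middle_informative P then true else false.
Lemma asbP (P : Prop) : reflect P (asb P).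
Proof. rewrite /asb; case: excluded_middle_informative => h; by constructor. Qed.

End Gen.
Unset Implicit Arguments. Set Strict Implicit.


Section Paths.
Set Implicit Arguments. Unset Strict Implicit.
Context {A Q : finType}.
Implicit Types (H : graph A Q) (N Z X : {set A * Q}) (u v w : (A + Q)%type).

Lemma ap_edge H N v0 s i : alt_path H N v0 s -> i < size s ->
  vadj H (nth v0 (v0::s) i) (nth v0 (v0::s) i.+1) /\
  (vinN N (nth v0 (v0::s) i) (nth v0 (v0::s) i.+1) <-> odd i).
Proof. by case=> _ h /h. Qed.

Lemma ap_uniq H N v0 s : alt_path H N v0 s -> uniq (v0 :: s).
Proof. by case. Qed.

Lemma ap_side H N v0 s i : alt_path H N v0 s -> i <= size s ->
  side (nth v0 (v0::s) i) = side v0 (+) odd i.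
Proof.
move=> hp; elim: i => [|i IH] hi; first by rewrite addbF.
have [hv _] := ap_edge hp hi.
have := vadj_side hv; rewrite IH ?(ltnW hi) //=.
move: (side (nth v0 (v0 :: s) i.+1)) (side v0) (odd i) => x y z.
by case: x; case: y; case: z.
Qed.

Lemma ap_last_side H N v0 s : alt_path H N v0 s ->
  side (last v0 s) = side v0 (+) odd (size s).
Proof. by move=> hp; rewrite (last_nth v0) (ap_side hp). Qed.

Lemma ap_parity H N v0 s : alt_path H N v0 s ->
  odd (size s) = (side v0 != side (last v0 s)).
Proof.
move=> hp; rewrite (ap_last_side hp).
move: (side v0) (odd _) => x y; by case: x; case: y.
Qed.

Lemma ap_take H N v0 s n : alt_path H N v0 s -> alt_path H N v0 (take n s).
Proof.
move=> hp; split.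
  have := take_uniq n.+1 (ap_uniq hp); by [].
move=> i hi.
have [hn his] : i < n /\ i < size s.
  move: hi; rewrite size_take; case: ifP => h1 h2; lia.
have e1 : nth v0 (v0 :: take n s) i = nth v0 (v0 :: s) i.
  by rewrite -[v0 :: take n s]/(take n.+1 (v0 :: s)) nth_take // ltnW.
have e2 : nth v0 (v0 :: take n s) i.+1 = nth v0 (v0 :: s) i.+1.
  by rewrite -[v0 :: take n s]/(take n.+1 (v0 :: s)) nth_take.
rewrite e1 e2; exact: ap_edge.
Qed.

Definition RCH H N v0 v := exists s, alt_path H N v0 s /\ last v0 s = v.

Lemma ap_mem H N v0 s w : alt_path H N v0 s -> w \in v0 :: s -> RCH H N v0 w.
Proof.
move=> hp hw; set i := index w (v0 :: s).
have hi : i <= size s by rewrite -ltnS /i index_mem.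
exists (take i s); split; first exact: ap_take.
rewrite (last_nth v0) size_takel //.
by rewrite -[v0 :: take i s]/(take i.+1 (v0 :: s)) nth_take // nth_index.
Qed.

Lemma ap_rcons H N v0 s w : alt_path H N v0 s -> w \notin v0 :: s ->
  vadj H (last v0 s) w -> (vinN N (last v0 s) w <-> odd (size s)) ->
  alt_path H N v0 (rcons s w).
Proof.
move=> hp hw ha hn; split.
  rewrite -rcons_cons rcons_uniq hw; exact: ap_uniq hp.
move=> i; rewrite size_rcons ltnS leq_eqVlt => /orP [/eqP ->|hi].
  rewrite -rcons_cons nth_rcons /= ltnS leqnn -(last_nth v0).
  by rewrite [nth _ (rcons _ _) _]nth_rcons ltnn eqxx.
have h1 : i <= size s by lia.
have h2 : i < (size s).+1 by lia.
rewrite -rcons_cons !nth_rcons /= h2 ltnS hi; exact: ap_edge.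
Qed.

Lemma EXT H N v0 s u w : alt_path H N v0 s -> last v0 s = u -> vadj H u w ->
  (vinN N u w <-> odd (size s)) -> RCH H N v0 w.
Proof.
move=> hp hl ha hn; case hw: (w \in v0 :: s); first exact: ap_mem hp _.
exists (rcons s w); split; last by rewrite last_rcons.
by apply: ap_rcons => //; [rewrite hw | rewrite hl | rewrite hl].
Qed.

Lemma mkE_sym u w : mkE u w = mkE w u.
Proof. by case: u; case: w. Qed.

Lemma PRED H N v0 s u w : is_matching H N -> unmatched N v0 -> alt_path H N v0 s ->
  last v0 s = u -> ~~ odd (size s) -> vinN N u w -> w \in v0 :: s.
Proof.
move=> hM hu hp hl hodd hin.
case/lastP: s hp hl hodd => [|s1 y] hp hl hodd.
  by rewrite /= in hl; subst u; case: (hu w).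
rewrite last_rcons in hl; subst y.
rewrite size_rcons /= in hodd.
have hi : size s1 < size (rcons s1 u) by rewrite size_rcons.
have [_ /iffRL hin2] := ap_edge hp hi.
have hin' := hin2 (negbNE hodd).
have e1 : nth v0 (v0 :: rcons s1 u) (size s1) = last v0 s1.
  by rewrite -rcons_cons nth_rcons /= ltnS leqnn -(last_nth v0).
have e2 : nth v0 (v0 :: rcons s1 u) (size s1).+1 = u.
  by rewrite /= nth_rcons ltnn eqxx.
rewrite e1 e2 in hin'.
move: hin hin' => /vinNE [e [he1 he2]] /vinNE [f [hf1 hf2]].
have [te _ _] := mkE_touch he1.
have [_ tf _] := mkE_touch hf1.
have efe := matchingT hM he2 hf2 te tf; subst f.
rewrite mkE_sym in hf1.
have -> := mkE_other he1 hf1.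
rewrite -rcons_cons mem_rcons in_cons; apply/orP; right.
exact: mem_last.
Qed.

Lemma EXT2 H N v0 s u w : is_matching H N -> unmatched N v0 -> alt_path H N v0 s ->
  last v0 s = u -> ~~ odd (size s) -> vadj H u w -> RCH H N v0 w.
Proof.
move=> hM hu hp hl ho ha.
case: (asbP (vinN N u w)) => hin.
  exact: ap_mem hp (PRED hM hu hp hl ho hin).
apply: EXT hp hl ha _; split => // h; by rewrite h in ho.
Qed.

Lemma EXT1 H N v0 s u w : is_matching H N -> alt_path H N v0 s ->
  last v0 s = u -> odd (size s) -> vinN N u w -> RCH H N v0 w.
Proof.
move=> hM hp hl ho hin.
apply: EXT hp hl (vinN_vadj hM hin) _; by split.
Qed.

End Paths.
Unset Implicit Arguments. Set Strict Implicit.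


Section Aug.
Set Implicit Arguments. Unset Strict Implicit.
Context {A Q : finType}.
Implicit Types (H : graph A Q) (N Z X : {set A * Q}) (u v w : (A + Q)%type).

Lemma vinN_some N x y g : mkE x y = Some g -> (vinN N x y <-> g \in N).
Proof.
move=> hg; rewrite vinNE; split; last by move=> h; exists g.
by case=> g' [hg' h]; rewrite hg in hg'; case: hg' => ->.
Qed.

Lemma vadj_sym H u w : vadj H u w -> vadj H w u.
Proof. by case: u; case: w. Qed.

Lemma vinN_sym N u w : vinN N u w -> vinN N w u.
Proof. exact: vadj_sym. Qed.

Lemma augment H Z v0 s : is_matching H Z -> unmatched Z v0 -> alt_path H Z v0 s ->
  odd (size s) -> unmatched Z (last v0 s) -> exists Z', is_matching H Z' /\ #|Z| < #|Z'|.
Proof.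
move: (leqnn (size s)); move: {2}(size s) => n.
elim: n s Z v0 => [|n IH] s Z v0 hn hZ hu hp ho hl.
  by move: hn ho; rewrite leqn0 => /eqP ->.
case: s hn ho hp hl => [|v1 [|v2 s]] //= hn ho hp hl.
-
  have [ha _] := ap_edge (i:=0) hp erefl.
  move: ha => /= /vadjE [e [he1 he2]].
  have [t0 t1 _] := mkE_touch he1.
  have hnZ : e \notin Z by apply/negP => h; apply: (proj1 (unmatchedE _ _) hu e h t0).
  exists (e |: Z); split; last by rewrite cardsU1 hnZ.
  apply: matchingI.
    move=> f; rewrite in_setU1 => /orP [/eqP -> //|hf]; by case: hZ => h _ _; apply: h.
  move=> f g z; rewrite !in_setU1 => /orP [/eqP ->|hf] /orP [/eqP ->|hg] // tf tg.
  + have := mkE_touch3 he1 tf => -[] hz; subst z.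
    * by case: (proj1 (unmatchedE _ _) hu g hg tg).
    * by case: (proj1 (unmatchedE _ _) hl g hg tg).
  + have := mkE_touch3 he1 tg => -[] hz; subst z.
    * by case: (proj1 (unmatchedE _ _) hu f hf tf).
    * by case: (proj1 (unmatchedE _ _) hl f hf tf).
  + exact: (matchingT hZ hf hg tf tg).
-
  have [ha0 _] := ap_edge (i:=0) hp erefl.
  have [_ hn1] := ap_edge (i:=1) hp erefl.
  move: ha0 => /= /vadjE [e01 [h01 h01H]].
  have /vinNE [e12 [h12 h12Z]] : vinN Z v1 v2 by apply/hn1.
  have [t00 t01 _] := mkE_touch h01.
  have [t11 t12 _] := mkE_touch h12.
  have hu3 := ap_uniq hp.
  move: (hu3); rewrite /= !in_cons !negb_or => /andP [/and3P [n01 n02 n0s]] /andP [/andP [n12 n1s] /andP [n2s hus]].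
  have hnZ : e01 \notin Z by apply/negP => h; apply: (proj1 (unmatchedE _ _) hu e01 h t00).
  set Z' := e01 |: (Z :\ e12).
  have hZ' : is_matching H Z'.
    apply: matchingI.
      move=> f; rewrite in_setU1 in_setD1 => /orP [/eqP -> //|/andP [_ hf]]; by case: hZ => h _ _; apply: h.
    have key : forall f z, f \in Z :\ e12 -> touch e01 z -> touch f z -> False.
      move=> f z; rewrite in_setD1 => /andP [hfe hf] tz tf.
      have := mkE_touch3 h01 tz => -[] hz; subst z.
      * by case: (proj1 (unmatchedE _ _) hu f hf tf).
      * by move/eqP: hfe; apply; apply: (matchingT hZ hf h12Z tf t11).
    move=> f g z; rewrite !in_setU1 => /orP [/eqP ->|hf] /orP [/eqP ->|hg] // tf tg.
    + by case: (key _ _ hg tf tg).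
    + by case: (key _ _ hf tg tf).
    + by move: hf hg; rewrite !in_setD1 => /andP [_ hf] /andP [_ hg]; exact: (matchingT hZ hf hg tf tg).
  have hcard : #|Z'| = #|Z|.
    rewrite cardsU1 in_setD1 negb_and hnZ orbT /= (cardsD1 e12 Z) h12Z.
    by rewrite add1n.
  have memZ' : forall x y g, x \in v2 :: s -> y \in v2 :: s -> mkE x y = Some g ->
      (g \in Z') = (g \in Z).
    move=> x y g hx hy hg.
    have g01 : g != e01.
      apply/eqP => hge; subst g; have := mkE_touch3 hg t00 => -[] hz;
        [move: hx|move: hy]; by rewrite -hz in_cons (negPf n02) (negPf n0s).
    have g12 : g != e12.
      apply/eqP => hge; subst g; have := mkE_touch3 hg t11 => -[] hz;
        [move: hx|move: hy]; by rewrite -hz in_cons (negPf n12) (negPf n1s).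
    by rewrite /Z' in_setU1 in_setD1 (negPf g01) g12.
  have hp' : alt_path H Z' v2 s.
    split; first by rewrite /= n2s hus.
    move=> i hi.
    have hi2 : i.+2 < size [:: v1, v2 & s] by [].
    have [hva hvn] := ap_edge hp hi2.
    have ex1 : nth v0 [:: v0, v1, v2 & s] i.+2 = nth v2 (v2 :: s) i.
      by rewrite -[nth v0 [:: v0, v1, v2 & s] i.+2]/(nth v0 (v2 :: s) i) (set_nth_default v2) //= ltnW.
    have ex2 : nth v0 [:: v0, v1, v2 & s] i.+3 = nth v2 (v2 :: s) i.+1.
      by rewrite -[nth v0 [:: v0, v1, v2 & s] i.+3]/(nth v0 (v2 :: s) i.+1) (set_nth_default v2).
    rewrite ex1 ex2 in hva hvn; split => //.
    have m1 : nth v2 (v2 :: s) i \in v2 :: s by apply: mem_nth; rewrite /= ltnS ltnW.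
    have m2 : nth v2 (v2 :: s) i.+1 \in v2 :: s by apply: mem_nth; rewrite /= ltnS.
    move: (hva) => /vadjE [g [hg _]].
    have hm := memZ' _ _ _ m1 m2 hg.
    have e3 : odd i.+2 = odd i by rewrite /= negbK.
    rewrite -e3; split => h.
    - by apply/hvn; apply/(vinN_some _ hg); rewrite -hm; apply/(vinN_some _ hg).
    - by apply/(vinN_some _ hg); rewrite hm; apply/(vinN_some _ hg); apply/hvn.
  have hu2 : unmatched Z' v2.
    apply/unmatchedE => f; rewrite in_setU1 in_setD1 => /orP [/eqP ->|/andP [hfe hf]] tf.
    * have := mkE_touch3 h01 tf => -[] hz; subst; [move/eqP: n02 | move/eqP: n12]; by [].
    * by move/eqP: hfe; apply; apply: (matchingT hZ hf h12Z tf t12).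
  have hl2 : unmatched Z' (last v2 s).
    have hm : last v2 s \in v2 :: s := mem_last v2 s.
    apply/unmatchedE => f; rewrite in_setU1 in_setD1 => /orP [/eqP ->|/andP [hfe hf]] tf.
    * have := mkE_touch3 h01 tf => -[] hz.
      - by move: hm; rewrite hz in_cons (negPf n02) (negPf n0s).
      - by move: hm; rewrite hz in_cons (negPf n12) (negPf n1s).
    * by apply: (proj1 (unmatchedE _ _) hl f hf tf).
  have [Z'' [h1 h2]] := IH s Z' v2 (ltnW hn) hZ' hu2 hp' ltac:(by move: ho; rewrite /=; case: (odd _)) hl2.
  by exists Z''; split => //; rewrite -hcard.
Qed.

End Aug.
Unset Implicit Arguments. Set Strict Implicit.


Section Max.
Set Implicit Arguments. Unset Strict Implicit.
Context {A Q : finType}.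
Implicit Types (H : graph A Q) (N Z X : {set A * Q}) (u v w : (A + Q)%type).

Lemma exists_max H : exists N, is_max_matching H N.
Proof.
apply: NNPP => hn.
have step : forall N, is_matching H N -> exists N', is_matching H N' /\ #|N| < #|N'|.
  move=> N hN; apply: NNPP => h; apply: hn; exists N; split => // N' hN'.
  rewrite leqNgt; apply/negP => hlt; apply: h; by exists N'.
have : forall n, exists N, is_matching H N /\ n <= #|N|.
  elim => [|n [N [hN hle]]].
    exists set0; split => //; apply: matchingI => e; by rewrite in_set0.
  have [N' [hN' hlt]] := step N hN; exists N'; split => //; exact: leq_ltn_trans hle hlt.
move=> /(_ #|{: A * Q}|.+1) [N [_ hle]].
by have := max_card (mem N); rewrite leqNgt => /negP; apply.
Qed.

Lemma touch_other e v : touch e v ->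
  exists w, [/\ touch e w, side v != side w & mkE v w = Some e].
Proof.
case: e => a q [->|->] /=.
- by exists (inr q); split => //; right.
- by exists (inl a); split => //; left.
Qed.

Lemma cover_max H N Z : is_matching H N -> is_max_matching H Z ->
  exists Z', is_max_matching H Z' /\ forall v, ~ unmatched N v -> ~ unmatched Z' v.
Proof.
move=> hN; move: (leqnn #|N :\: Z|); move: {2}#|N :\: Z| => n.
elim: n Z => [|n IH] Z hn hZ.
- exists Z; split => // v /matchedE [e he te] hu.
  have : e \in N :\: Z.
    rewrite in_setD he andbT; apply/negP => heZ; exact: (proj1 (unmatchedE _ _) hu e heZ te).
  by move: hn; rewrite leqn0 cards_eq0 => /eqP ->; rewrite in_set0.
- case: (classic (forall v, ~ unmatched N v -> ~ unmatched Z v)) => hall.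
    by exists Z.
  have [v hv] : exists v, ~ (~ unmatched N v -> ~ unmatched Z v).
    by apply: NNPP => h; apply: hall => v; apply: NNPP => h2; apply: h; exists v.
  have hvN : ~ unmatched N v by move=> h; apply: hv => h2.
  have hvZ : unmatched Z v by apply: NNPP => h; apply: hv => _.
  have [e he te] := proj1 (matchedE _ _) hvN.
  have [w [tw sw hmk]] := touch_other te.
  have hnZ : e \notin Z by apply/negP => h; exact: (proj1 (unmatchedE _ _) hvZ e h te).
  have heH : H e.1 e.2 by case: hN => h _ _; apply: h.
  case: (classic (unmatched Z w)) => hwZ.
    exfalso; case: hZ => hZm hZmax.
    have : is_matching H (e |: Z).
      apply: matchingI.
        move=> f; rewrite in_setU1 => /orP [/eqP -> //|hf]; by case: hZm => h _ _; apply: h.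
      move=> f g z; rewrite !in_setU1 => /orP [/eqP ->|hf] /orP [/eqP ->|hg] // tf tg.
      + have := mkE_touch3 hmk tf => -[] hz; subst z.
        * by case: (proj1 (unmatchedE _ _) hvZ g hg tg).
        * by case: (proj1 (unmatchedE _ _) hwZ g hg tg).
      + have := mkE_touch3 hmk tg => -[] hz; subst z.
        * by case: (proj1 (unmatchedE _ _) hvZ f hf tf).
        * by case: (proj1 (unmatchedE _ _) hwZ f hf tf).
      + exact: (matchingT hZm hf hg tf tg).
    by move/hZmax; rewrite cardsU1 hnZ ltnn.
  have [f hf tf] := proj1 (matchedE _ _) hwZ.
  have hfN : f \notin N.
    apply/negP => hfN; have hef := matchingT hN he hfN tw tf; subst f; by rewrite hf in hnZ.
  case: hZ => hZm hZmax.
  set Z' := e |: (Z :\ f).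
  have hZ' : is_matching H Z'.
    apply: matchingI.
      move=> g; rewrite in_setU1 in_setD1 => /orP [/eqP -> //|/andP [_ hg]]; by case: hZm => h _ _; apply: h.
    have key : forall g z, g \in Z :\ f -> touch e z -> touch g z -> False.
      move=> g z; rewrite in_setD1 => /andP [hgf hg] tz tg.
      have := mkE_touch3 hmk tz => -[] hz; subst z.
      * by case: (proj1 (unmatchedE _ _) hvZ g hg tg).
      * by move/eqP: hgf; apply; apply: (matchingT hZm hg hf tg tf).
    move=> g g' z; rewrite !in_setU1 => /orP [/eqP ->|hg] /orP [/eqP ->|hg'] // tg tg'.
    + by case: (key _ _ hg' tg tg').
    + by case: (key _ _ hg tg' tg).
    + by move: hg hg'; rewrite !in_setD1 => /andP [_ hg] /andP [_ hg']; exact: (matchingT hZm hg hg' tg tg').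
  have hcard : #|Z'| = #|Z|.
    rewrite cardsU1 in_setD1 negb_and hnZ orbT /= (cardsD1 f Z) hf.
    by rewrite add1n.
  have hmax' : is_max_matching H Z' by split => // N' /hZmax; rewrite hcard.
  have hsub : N :\: Z' \subset (N :\: Z) :\ e.
    apply/subsetP => g; rewrite /Z' !inE negb_or negb_and.
    move=> /andP [/andP [hge /orP [hgf|hgZ]] hgN].
      by move/negPf: hfN; rewrite -(eqP (negbNE hgf)) hgN.
    by rewrite hge hgZ hgN.
  have hlt : #|N :\: Z'| <= n.
    have hc := cardsD1 e (N :\: Z); rewrite in_setD hnZ he /= add1n in hc.
    rewrite hc ltnS in hn; exact: leq_trans (subset_leq_card hsub) hn.
  exact: IH Z' hlt hmax'.
Qed.

End Max.
Unset Implicit Arguments. Set Strict Implicit.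


Section Count.
Set Implicit Arguments. Unset Strict Implicit.
Context {A Q : finType}.

Lemma cnt_tight (X : {set A * Q}) (KA : {set A}) (KQ : {set Q}) :
  tmatch X -> (forall e, e \in X -> e.1 \in KA \/ e.2 \in KQ) ->
  #|X| <= #|KA| + #|KQ| /\
  (#|KA| + #|KQ| <= #|X| ->
   [/\ forall a, a \in KA -> exists2 e, e \in X & e.1 = a,
       forall q, q \in KQ -> exists2 e, e \in X & e.2 = q &
       forall e, e \in X -> ~ (e.1 \in KA /\ e.2 \in KQ)]).
Proof.
move=> hT hC.
set X1 := [set e in X | e.1 \in KA]; set X2 := [set e in X | e.2 \in KQ].
have hX : X = X1 :|: X2.
  apply/setP => e; rewrite !inE; apply/idP/idP.
    by move=> he; rewrite he /=; case: (hC e he) => ->; rewrite ?orbT.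
  by case/orP => /andP [].
have inj1 : {in X1 &, injective fst}.
  move=> e f; rewrite !inE => /andP [he _] /andP [hf _] h.
  by apply: (hT e f (inl e.1)) => //; [left|left; rewrite h].
have inj2 : {in X2 &, injective snd}.
  move=> e f; rewrite !inE => /andP [he _] /andP [hf _] h.
  by apply: (hT e f (inr e.2)) => //; [right|right; rewrite h].
have s1 : fst @: X1 \subset KA by apply/subsetP => a /imsetP [e]; rewrite inE => /andP [_ h] ->.
have s2 : snd @: X2 \subset KQ by apply/subsetP => a /imsetP [e]; rewrite inE => /andP [_ h] ->.
have c1 := subset_leq_card s1; rewrite card_in_imset // in c1.
have c2 := subset_leq_card s2; rewrite card_in_imset // in c2.
have cu := cardsUI X1 X2; rewrite -hX in cu.
split.
  move: c1 c2 cu; move: #|X| #|X1| #|X2| #|X1 :&: X2| #|KA| #|KQ| => *; lia.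
move=> hle.
have [e1 e2 e3] : [/\ #|X1| = #|KA|, #|X2| = #|KQ| & #|X1 :&: X2| = 0].
  move: hle c1 c2 cu; move: #|X| #|X1| #|X2| #|X1 :&: X2| #|KA| #|KQ| => *; split; lia.
have eA : fst @: X1 = KA by apply/eqP; rewrite eqEcard s1 card_in_imset // e1 leqnn.
have eQ : snd @: X2 = KQ by apply/eqP; rewrite eqEcard s2 card_in_imset // e2 leqnn.
split.
- move=> a; rewrite -eA => /imsetP [e]; rewrite inE => /andP [he _] ->; by exists e.
- move=> q; rewrite -eQ => /imsetP [e]; rewrite inE => /andP [he _] ->; by exists e.
- move=> e he [h1 h2]; move/eqP: e3; rewrite cards_eq0 => /eqP h.
  have : e \in X1 :&: X2 by rewrite !inE he h1 h2.
  by rewrite h inE.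
Qed.

Lemma cnt_low (Y : {set A * Q}) (KA : {set A}) (KQ : {set Q}) :
  (forall a, a \in KA -> exists2 e, e \in Y & e.1 = a) ->
  (forall q, q \in KQ -> exists2 e, e \in Y & e.2 = q) ->
  (forall e, e \in Y -> ~ (e.1 \in KA /\ e.2 \in KQ)) ->
  #|KA| + #|KQ| <= #|Y|.
Proof.
move=> hA hQ hD.
set Y1 := [set e in Y | e.1 \in KA]; set Y2 := [set e in Y | e.2 \in KQ].
have s1 : KA \subset fst @: Y1.
  apply/subsetP => a ha; have [e he ea] := hA a ha; apply/imsetP; exists e => //; by rewrite inE he ea ha.
have s2 : KQ \subset snd @: Y2.
  apply/subsetP => a ha; have [e he ea] := hQ a ha; apply/imsetP; exists e => //; by rewrite inE he ea ha.
have c1 := leq_trans (subset_leq_card s1) (leq_imset_card _ _).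
have c2 := leq_trans (subset_leq_card s2) (leq_imset_card _ _).
have d : Y1 :&: Y2 = set0.
  apply/setP => e; rewrite !inE; apply/negP => /andP [/andP [he h1] /andP [_ h2]]; exact: (hD e he).
have cu := cardsUI Y1 Y2; rewrite d cards0 addn0 in cu.
have sU : Y1 :|: Y2 \subset Y by apply/subsetP => e; rewrite !inE => /orP [] /andP [].
have c3 := subset_leq_card sU.
move: c1 c2 cu c3; move: #|Y| #|Y1| #|Y2| #|Y1 :|: Y2| #|KA| #|KQ| => *; lia.
Qed.

End Count.
Unset Implicit Arguments. Set Strict Implicit.


Section KC.
Set Implicit Arguments. Unset Strict Implicit.
Context {A Q : finType}.
Implicit Types (H : graph A Q) (N Z X : {set A * Q}) (u v w : (A + Q)%type).

Definition RF H Z b v := exists v0 s,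
  [/\ side v0 = b, unmatched Z v0, alt_path H Z v0 s & last v0 s = v].
Definition KK H Z b v := (side v = b /\ ~ RF H Z b v) \/ (side v != b /\ RF H Z b v).

Lemma ap_nil H N v0 : alt_path H N v0 [::].
Proof. by split. Qed.

Lemma sides_flip (x y b : bool) : x != y -> x != b -> y = b.
Proof. by case: x; case: y; case: b. Qed.

Lemma K_cover H Z b u w : is_matching H Z -> vadj H u w -> KK H Z b u \/ KK H Z b w.
Proof.
move=> hZ.
have main : forall u w, side u = b -> vadj H u w -> KK H Z b u \/ KK H Z b w.
  move=> {}u {}w su ha.
  case: (classic (RF H Z b u)) => hr; last by left; rewrite /KK; left.
  case: hr => v0 [s [sv0 hu hp hl]].
  have hev : ~~ odd (size s) by rewrite (ap_parity hp) hl sv0 su eqxx.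
  have [s' [hp' hl']] := EXT2 hZ hu hp hl hev ha.
  right; rewrite /KK; right; split.
    by rewrite -su eq_sym; exact: vadj_side ha.
  by exists v0, s'.
case: (boolP (side u == b)) => [/eqP su|su] ha; first exact: main.
have sw : side w = b := sides_flip (vadj_side ha) su.
by case: (main w u sw (vadj_sym ha)); auto.
Qed.

Lemma K_Zedge H Z b u w : is_matching H Z -> vinN Z u w -> ~ (KK H Z b u /\ KK H Z b w).
Proof.
move=> hZ.
have main : forall u w, side u = b -> vinN Z u w -> ~ (KK H Z b u /\ KK H Z b w).
  move=> {}u {}w su hin [Ku Kw].
  have sw : side w != b by rewrite -su eq_sym; exact: vadj_side (vinN_vadj hZ hin).
  case: Ku => [[_ nRu]|[hsu _]]; last by rewrite su eqxx in hsu.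
  case: Kw => [[hsw _]|[_ [v0 [s [sv0 hu hp hl]]]]]; first by rewrite hsw eqxx in sw.
  have ho : odd (size s) by rewrite (ap_parity hp) hl sv0 eq_sym.
  have [s' [hp' hl']] := EXT1 hZ hp hl ho (vinN_sym hin).
  by apply: nRu; exists v0, s'.
case: (boolP (side u == b)) => [/eqP su|su] hin; first exact: main.
have sw : side w = b := sides_flip (vadj_side (vinN_vadj hZ hin)) su.
by move=> [h1 h2]; apply: (main w u sw (vinN_sym hin)).
Qed.

Lemma K_Zcov H Z b v : is_max_matching H Z -> KK H Z b v -> ~ unmatched Z v.
Proof.
move=> [hZ hmax] [[sv nR]|[sv [v0 [s [sv0 hu hp hl]]]]] hun.
  by apply: nR; exists v, [::]; split => //; exact: ap_nil.
have ho : odd (size s) by rewrite (ap_parity hp) hl sv0 eq_sym.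
rewrite -hl in hun.
have [Z' [hZ' hlt]] := augment hZ hu hp ho hun.
by have := hmax Z' hZ'; rewrite leqNgt hlt.
Qed.

Definition KA H Z b : {set A} := [set a | asb (KK H Z b (inl a))].
Definition KQ H Z b : {set Q} := [set q | asb (KK H Z b (inr q))].

Lemma inKA H Z b a : (a \in KA H Z b) <-> KK H Z b (inl a).
Proof. by rewrite inE; split => /asbP. Qed.
Lemma inKQ H Z b q : (q \in KQ H Z b) <-> KK H Z b (inr q).
Proof. by rewrite inE; split => /asbP. Qed.

Lemma matched_fst N a : ~ unmatched N (inl a) -> exists2 e, e \in N & e.1 = a.
Proof. by move/matchedE => [e he [h|//]]; exists e => //; case: h. Qed.
Lemma matched_snd N q : ~ unmatched N (inr q) -> exists2 e, e \in N & e.2 = q.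
Proof. by move/matchedE => [e he [//|h]]; exists e => //; case: h. Qed.

Lemma K_Z_count H Z b : is_max_matching H Z -> #|KA H Z b| + #|KQ H Z b| <= #|Z|.
Proof.
move=> hZ; apply: cnt_low.
- move=> a /inKA hK; exact: matched_fst (K_Zcov hZ hK).
- move=> q /inKQ hK; exact: matched_snd (K_Zcov hZ hK).
- move=> [a q] he /= [/inKA h1 /inKQ h2].
  by apply: (K_Zedge (b:=b) (proj1 hZ) (u:=inl a) (w:=inr q)).
Qed.

Lemma K_cover_edges H Z b X : is_matching H Z -> is_matching H X ->
  forall e, e \in X -> e.1 \in KA H Z b \/ e.2 \in KQ H Z b.
Proof.
move=> hZ hX [a q] he.
have ha : vadj H (inl a) (inr q) by case: hX => h _ _; exact: (h _ he).
by case: (K_cover b hZ ha) => h; [left; apply/inKA|right; apply/inKQ].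
Qed.

Lemma K_N H Z N b : is_max_matching H Z -> is_max_matching H N ->
  (forall v, KK H Z b v -> ~ unmatched N v) /\
  (forall u w, vinN N u w -> ~ (KK H Z b u /\ KK H Z b w)).
Proof.
move=> hZ hN.
have hcov := K_cover_edges b (proj1 hZ) (proj1 hN).
have [_ ht] := cnt_tight (matchingT (proj1 hN)) hcov.
have hle : #|KA H Z b| + #|KQ H Z b| <= #|N|.
  apply: leq_trans (K_Z_count b hZ) _; exact: (proj2 hN Z (proj1 hZ)).
have [hA hQ hD] := ht hle.
split.
- case=> [a|q] hK hun.
  + have [e he ea] := hA a (proj2 (inKA _ _ _ _) hK).
    by apply: (proj1 (unmatchedE _ _) hun e he); left; rewrite ea.
  + have [e he ea] := hQ q (proj2 (inKQ _ _ _ _) hK).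
    by apply: (proj1 (unmatchedE _ _) hun e he); right; rewrite ea.
- case=> [a|q]; case=> [a'|q'] //= hin [h1 h2].
  + by apply: (hD _ hin); split; [apply/inKA|apply/inKQ].
  + by apply: (hD _ hin); split; [apply/inKA|apply/inKQ].
Qed.

Lemma k4 H Z N b v0 s : is_max_matching H Z -> is_max_matching H N ->
  unmatched N v0 -> alt_path H N v0 s -> ~~ odd (size s) -> ~ KK H Z b (last v0 s).
Proof.
move=> hZ hN hu hp hev.
have [hNc hNe] := K_N b hZ hN.
have key : forall j, j.*2 <= size s -> ~ KK H Z b (nth v0 (v0 :: s) j.*2).
  elim => [|j IH] hj.
    by move=> hK; apply: (hNc v0 hK).
  rewrite doubleS in hj *.
  have hj1 : j.*2 < size s by apply: ltn_trans hj.
  have [ha _] := ap_edge hp hj1.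
  have [_ hn] := ap_edge hp hj.
  have hin : vinN N (nth v0 (v0 :: s) j.*2.+1) (nth v0 (v0 :: s) j.*2.+2).
    by apply/hn; rewrite /= odd_double.
  have K1 : KK H Z b (nth v0 (v0 :: s) j.*2.+1).
    by case: (K_cover b (proj1 hZ) ha) => // h; case: (IH (ltnW hj1)).
  by move=> K2; apply: (hNe _ _ hin).
have e : (size s)./2.*2 = size s by rewrite -{2}(odd_double_half (size s)) (negPf hev).
have := key (size s)./2; rewrite e (last_nth v0) => h; exact: h.

Qed.

End KC.
Unset Implicit Arguments. Set Strict Implicit.


Section T.
Set Implicit Arguments. Unset Strict Implicit.
Context {A Q : finType}.
Implicit Types (H : graph A Q) (N Z X : {set A * Q}) (u v w x y : (A + Q)%type).

Lemma odd_K H v : odd_v H v -> exists Z b, is_max_matching H Z /\ KK H Z b v.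
Proof.
case=> Z [hZ [v0 [s [hu hp hl ho]]]].
exists Z, (side v0); split => //; rewrite /KK; right; split.
  by move: ho; rewrite (ap_parity hp) hl eq_sym.
by exists v0, s.
Qed.

Lemma T_odd_cov H v N : odd_v H v -> is_max_matching H N -> ~ unmatched N v.
Proof.
move=> /odd_K [Z [b [hZ hK]]] hN; exact: (proj1 (K_N b hZ hN) v hK).
Qed.

Lemma T_disj H v : odd_v H v -> ~ even_v H v.
Proof.
move=> /odd_K [Z [b [hZ hK]]] [N [hN [w0 [s [hu hp hl he]]]]].
by have := k4 (b:=b) hZ hN hu hp he; rewrite hl; apply.
Qed.

Lemma T_ind H v Z : even_v H v -> is_max_matching H Z ->
  exists v0 s, [/\ unmatched Z v0, alt_path H Z v0 s, last v0 s = v & ~~ odd (size s)].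
Proof.
move=> [N [hN [w0 [s [hu hp hl he]]]]] hZ.
have nK := k4 (b:=side v) hZ hN hu hp he; rewrite hl in nK.
have : RF H Z (side v) v by apply: NNPP => h; apply: nK; left.
case=> v0 [s' [sv0 hu' hp' hl']]; exists v0, s'; split => //.
by rewrite (ap_parity hp') hl' sv0 eqxx.
Qed.

Lemma T_ext H x y : even_v H x -> vadj H x y -> odd_v H y.
Proof.
move=> [N [hN [v0 [s [hu hp hl he]]]]] ha.
have [s' [hp' hl']] := EXT2 (proj1 hN) hu hp hl he ha.
exists N; split => //; exists v0, s'; split => //.
rewrite (ap_parity hp') hl'.
have e1 : side v0 = side x by move: he; rewrite (ap_parity hp) hl; case: (side v0); case: (side x).
rewrite e1; exact: vadj_side ha.
Qed.

Lemma T_partner H N x y : is_max_matching H N -> vinN N x y -> odd_v H x -> even_v H y.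
Proof.
move=> hN hin [Z [hZ [v0 [s [hu hp hl ho]]]]].
case/lastP: s hp hl ho => [|s1 x'] //= hp hl ho.
rewrite last_rcons in hl; subst x'.
rewrite size_rcons /= in ho.
have hp1 : alt_path H Z v0 s1.
  by have := ap_take (size s1) hp; rewrite -cats1 take_size_cat.
have hi : size s1 < size (rcons s1 x) by rewrite size_rcons.
have [ha hn] := ap_edge hp hi.
have e1 : nth v0 (v0 :: rcons s1 x) (size s1) = last v0 s1.
  by rewrite -rcons_cons nth_rcons /= ltnS leqnn -(last_nth v0).
have e2 : nth v0 (v0 :: rcons s1 x) (size s1).+1 = x.
  by rewrite /= nth_rcons ltnn eqxx.
rewrite e1 e2 in ha hn.
set u := last v0 s1 in ha hn.
have heu : even_v H u by exists Z; split => //; exists v0, s1; split.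
have [w0 [P [hu0 hP hlP heP]]] := T_ind heu hN.
case: (classic (vinN N u x)) => hux.
  move: hin hux => /vinNE [e [he1 he2]] /vinNE [f [hf1 hf2]].
  have [te _ _] := mkE_touch he1.
  have [_ tf _] := mkE_touch hf1.
  have efe := matchingT (proj1 hN) he2 hf2 te tf; subst f.
  rewrite mkE_sym in hf1.
  by rewrite (mkE_other he1 hf1).
have [P2 [hP2 hl2]] := EXT hP hlP ha (conj (fun h => False_ind _ (hux h)) (fun h => False_ind _ (negP heP h))).
have sw0 : side w0 = side u by move: heP; rewrite (ap_parity hP) hlP; case: (side w0); case: (side u).
have ho2 : odd (size P2) by rewrite (ap_parity hP2) hl2 sw0; exact: vadj_side ha.
have [P3 [hP3 hl3]] := EXT1 (proj1 hN) hP2 hl2 ho2 hin.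
exists N; split => //; exists w0, P3; split => //.
rewrite (ap_parity hP3) hl3 sw0.
have s1' := vadj_side ha; have s2' := vadj_side (vinN_vadj (proj1 hN) hin).
move: s1' s2'; case: (side u); case: (side x); case: (side y) => //.
Qed.

Lemma T_unreach_cov H v N : unreach_v H v -> is_max_matching H N -> ~ unmatched N v.
Proof.
move=> [hne _] hN hu; apply: hne; exists N; split => //; exists v, [::]; split => //.
Qed.

Definition K0A H : {set A} := [set a | asb (odd_v H (inl a) \/ unreach_v H (inl a))].
Definition K0Q H : {set Q} := [set q | asb (odd_v H (inr q))].

Lemma K0_cover H a q : H a q -> a \in K0A H \/ q \in K0Q H.
Proof.
move=> ha; rewrite !inE.
case: (classic (odd_v H (inr q))) => h1; first by right; apply/asbP.
case: (classic (odd_v H (inl a) \/ unreach_v H (inl a))) => h2; first by left; apply/asbP.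
have hev : even_v H (inl a).
  apply: NNPP => h3; apply h2; right; split => // h4; apply h2; left; exact: h4.
by case: h1; apply: (T_ext hev).
Qed.

Lemma K0_nonOOU H a q : ~ joins_OOU H a q -> ~ (a \in K0A H /\ q \in K0Q H).
Proof. rewrite !inE => h [/asbP h1 /asbP h2]; apply: h; by right. Qed.

Lemma K0_cov H N : is_max_matching H N ->
  (forall a, a \in K0A H -> exists2 e, e \in N & e.1 = a) /\
  (forall q, q \in K0Q H -> exists2 e, e \in N & e.2 = q).
Proof.
move=> hN; split.
- move=> a; rewrite inE => /asbP [h|h]; apply: matched_fst;
    [exact: T_odd_cov h hN | exact: T_unreach_cov h hN].
- move=> q; rewrite inE => /asbP h; apply: matched_snd; exact: T_odd_cov h hN.
Qed.

Lemma max_nonOOU H N e : is_max_matching H N -> e \in N -> ~ joins_OOU H e.1 e.2.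
Proof.
case: e => a q hN he /=.
have hin : vinN N (inl a) (inr q) by [].
have hin' : vinN N (inr q) (inl a) by [].
case=> [[ho [ho'|hu]]|[ho [ho'|hu]]].
- exact: T_disj ho' (T_partner hN hin ho).
- exact: (proj1 hu) (T_partner hN hin ho).
- exact: T_disj ho' (T_partner hN hin' ho).
- exact: (proj1 hu) (T_partner hN hin' ho).
Qed.

Lemma K0_up H X : is_matching H X -> #|X| <= #|K0A H| + #|K0Q H|.
Proof.
move=> hX; apply: (proj1 (cnt_tight (matchingT hX) _)).
move=> [a q] he; apply: K0_cover; by case: hX => h _ _; exact: h _ he.
Qed.

Lemma K0_low H (Y : {set A * Q}) :
  (forall a, a \in K0A H -> exists2 e, e \in Y & e.1 = a) ->
  (forall q, q \in K0Q H -> exists2 e, e \in Y & e.2 = q) ->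
  (forall e, e \in Y -> ~ joins_OOU H e.1 e.2) ->
  #|K0A H| + #|K0Q H| <= #|Y|.
Proof.
move=> h1 h2 h3; apply: cnt_low h1 h2 _ => e he; exact: K0_nonOOU (h3 e he).
Qed.

End T.
Unset Implicit Arguments. Set Strict Implicit.


Section Stage.
Set Implicit Arguments. Unset Strict Implicit.
Context {A P : finType} (r : nat) (rk : A -> P -> nat).
Implicit Types (X Y : {set A * (P + A)}).
Local Notation V := (A + (P + A))%type.
Local Notation Hs t := (irving_stage r rk t).1.
Local Notation Als t := (irving_stage r rk t).2.
Local Notation fr a q := (frk r rk a q).

Definition OU t (v : V) := odd_v (Hs t) v \/ unreach_v (Hs t) v.

Lemma HsS t a q : Hs t.+1 a q <->
  (Hs t a q /\ ~ joins_OOU (Hs t) a q) \/ (fr a q = t.+2 /\ Als t.+1 a q).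
Proof. by []. Qed.

Lemma AlsS t a q : Als t.+1 a q <->
  Als t a q /\ ~ (t.+1 < fr a q /\ (OU t (inl a) \/ OU t (inr q))).
Proof. by []. Qed.

Lemma Hs0 a q : Hs 0 a q <-> fr a q = 1.
Proof. by []. Qed.

Lemma ST1 t a q : Hs t a q -> 0 < fr a q <= t.+1.
Proof.
elim: t => [|t IH]; first by move/Hs0 => ->.
move/HsS => [[h _]|[-> _]]; last by rewrite leqnn.
by case/andP: (IH h) => -> /= h2; apply: leq_trans h2 _.
Qed.

Lemma ST2 t0 t a q : t0 < t -> Hs t a q -> fr a q <= t0.+1 ->
  Hs t0 a q /\ ~ joins_OOU (Hs t0) a q.
Proof.
elim: t => [|t IH] // ht /HsS [[h1 h2]|[he _]] hf.
  move: ht; rewrite ltnS leq_eqVlt => /orP [/eqP ->|hlt] //.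
  exact: IH hlt h1 hf.
move: hf; rewrite he; move: ht; clear; move=> ht hf; lia.
Qed.

Lemma AL t a q : Als t a q -> forall t0, t0 < t ->
  ~ (t0.+1 < fr a q /\ (OU t0 (inl a) \/ OU t0 (inr q))).
Proof.
elim: t => [|t IH] // /AlsS [h1 h2] t0; rewrite ltnS leq_eqVlt => /orP [/eqP ->|ht] //.
exact: IH h1 t0 ht.
Qed.

Lemma ALc t a q : (forall t0, t0 < t ->
  ~ (t0.+1 < fr a q /\ (OU t0 (inl a) \/ OU t0 (inr q)))) -> Als t a q.
Proof.
elim: t => [|t IH] // h; apply/AlsS; split.
  by apply: IH => t0 ht; apply: h; apply: ltnW.
exact: h.
Qed.

Lemma ST3' t a q : Hs t a q -> 1 < fr a q -> Als (fr a q).-1 a q.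
Proof.
elim: t => [|t IH]; first by move/Hs0 => ->.
move/HsS => [[h _]|[he hA]]; first exact: IH.
by rewrite he.
Qed.

Lemma ST3 t0 t a q : Hs t a q -> t0 < t -> (OU t0 (inl a) \/ OU t0 (inr q)) ->
  fr a q <= t0.+1.
Proof.
move=> h ht hOU; rewrite leqNgt; apply/negP => hgt.
have h1 : 1 < fr a q by apply: leq_ltn_trans hgt.
have := AL (ST3' h h1) (t0:=t0).
have : t0 < (fr a q).-1 by move: hgt; clear; lia.
by move=> hh /(_ hh); apply.
Qed.

Lemma redE a q : reduced_graph r rk a q <-> Hs r a q /\ ~ joins_OOU (Hs r) a q.
Proof. by []. Qed.

Lemma ST2r t0 a q : reduced_graph r rk a q -> t0 <= r -> fr a q <= t0.+1 ->
  Hs t0 a q /\ ~ joins_OOU (Hs t0) a q.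
Proof.
move=> /redE [h1 h2]; rewrite leq_eqVlt => /orP [/eqP ->|ht] hf //.
exact: ST2 ht h1 hf.
Qed.

Lemma ST3r t0 a q : reduced_graph r rk a q -> t0 <= r ->
  (OU t0 (inl a) \/ OU t0 (inr q)) -> fr a q <= t0.+1.
Proof.
move=> /redE [h1 h2]; rewrite leq_eqVlt => /orP [/eqP ->|ht] hOU.
  by case/andP: (ST1 h1).
exact: ST3 h1 ht hOU.
Qed.

Lemma Hs_Gedge t a q : Hs t a q -> Gedge r rk a q.
Proof. by move/ST1 => /andP []. Qed.

Definition Mle (X : {set A * (P + A)}) s := [set e in X | fr e.1 e.2 <= s].
Definition sigX (X : {set A * (P + A)}) := signature r rk X.

Lemma Mle_cum X s : (forall e, e \in X -> 0 < fr e.1 e.2) ->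
  #|Mle X s.+1| = #|Mle X s| + sigX X s.+1.
Proof.
move=> hpos; rewrite /sigX /signature.
set B := [set e in X | _ == _].
have hd : Mle X s :&: B = set0.
  apply/setP => e; rewrite !inE; apply/negP => /andP [/andP [_ h1] /andP [_ /eqP h2]].
  by rewrite h2 ltnn in h1.
have -> : Mle X s.+1 = Mle X s :|: B.
  apply/setP => e; rewrite !inE; case: (e \in X) => //=.
  by rewrite leq_eqVlt ltnS orbC.
by rewrite cardsU hd cards0 subn0.
Qed.

Lemma Mle0 X : (forall e, e \in X -> 0 < fr e.1 e.2) -> #|Mle X 0| = 0.
Proof.
move=> hpos; apply/eqP; rewrite cards_eq0; apply/eqP/setP => e; rewrite !inE.
apply/negP => /andP [he h]; by have := hpos e he; rewrite lt0n -leqn0 h.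
Qed.

Lemma lex_cum X Y n : (forall e, e \in X -> 0 < fr e.1 e.2) ->
  (forall e, e \in Y -> 0 < fr e.1 e.2) -> n <= r.+1 ->
  (forall s, s <= n -> #|Mle X s| <= #|Mle Y s|) -> #|Mle X n| < #|Mle Y n| ->
  lex_lt r.+1 (sigX X) (sigX Y).
Proof.
move=> hX hY hn hle hlt.
have ex : exists s, #|Mle X s| < #|Mle Y s| by exists n.
case: (ex_minnP ex) => i hi hmin.
have hin : i <= n by apply: hmin.
have eqb : forall j, j < i -> #|Mle X j| = #|Mle Y j|.
  move=> j hj; apply/eqP; rewrite eqn_leq hle ?(leq_trans (ltnW hj) hin) //=.
  rewrite leqNgt; apply/negP => /hmin; rewrite leqNgt hj //.
case: i hi hmin hin eqb => [|i] hi hmin hin eqb.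
  by rewrite (Mle0 hX) (Mle0 hY) in hi.
exists i.+1; split.
- by rewrite /= (leq_trans hin hn).
- move=> j /andP [hj1 hj2].
  case: j hj1 hj2 => [|j] // _ hj2.
  have e1 := Mle_cum j hX; have e2 := Mle_cum j hY.
  have e3 := eqb j.+1 hj2; have e4 := eqb j (ltnW hj2).
  move: e1 e2 e3 e4; move: #|Mle X j.+1| #|Mle Y j.+1| #|Mle X j| #|Mle Y j| (sigX X j.+1) (sigX Y j.+1).
  clear; move=> *; lia.
- have e1 := Mle_cum i hX; have e2 := Mle_cum i hY; have e4 := eqb i (ltnSn i).
  move: e1 e2 e4 hi; move: #|Mle X i.+1| #|Mle Y i.+1| #|Mle X i| #|Mle Y i| (sigX X i.+1) (sigX Y i.+1).
  clear; move=> *; lia.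
Qed.

End Stage.
Unset Implicit Arguments. Set Strict Implicit.


Section F1.
Set Implicit Arguments. Unset Strict Implicit.
Context {A P : finType} (r : nat) (rk : A -> P -> nat).
Implicit Types (X Y M : {set A * (P + A)}).
Local Notation V := (A + (P + A))%type.
Local Notation Hs t := (irving_stage r rk t).1.
Local Notation fr a q := (frk r rk a q).
Local Notation Mle := (Mle r rk).
Local Notation OU := (OU r rk).

Lemma rm_match M : rank_maximal r rk M -> is_matching (Gedge r rk) M.
Proof. by case. Qed.

Lemma match_pos Y : is_matching (Gedge r rk) Y -> forall e, e \in Y -> 0 < fr e.1 e.2.
Proof. by case=> h _ _ e /h. Qed.

Lemma no_better M Y n : rank_maximal r rk M -> is_matching (Gedge r rk) Y -> n <= r.+1 ->
  (forall s, s <= n -> #|Mle M s| <= #|Mle Y s|) -> #|Mle M n| < #|Mle Y n| -> False.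
Proof.
move=> hM hY hn hle hlt; case: hM => hMm hno; apply: hno; exists Y; split => //.
exact: (lex_cum (match_pos hMm) (match_pos hY) hn hle hlt).
Qed.

Lemma tmatch_sub X Y : tmatch X -> Y \subset X -> tmatch Y.
Proof. move=> hX /subsetP hs e f v he hf; exact: hX (hs _ he) (hs _ hf). Qed.

Lemma Mle_sub X s : Mle X s \subset X.
Proof. by apply/subsetP => e; rewrite inE => /andP []. Qed.

Lemma inMle X s e : (e \in Mle X s) = (e \in X) && (fr e.1 e.2 <= s).
Proof. by rewrite inE. Qed.

Lemma covM M t0 v : is_max_matching (Hs t0) (Mle M t0.+1) -> OU t0 v ->
  exists2 f, f \in M & fr f.1 f.2 <= t0.+1 /\ touch f v.
Proof.
move=> hmax hOU.
have hm : ~ unmatched (Mle M t0.+1) v.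
  by case: hOU => h; [exact: T_odd_cov h hmax | exact: T_unreach_cov h hmax].
have [f hf tf] := proj1 (matchedE _ _) hm.
by move: hf; rewrite inMle => /andP [hf1 hf2]; exists f.
Qed.

Lemma touch_inl (e : A * (P + A)) a : touch e (inl a) -> e.1 = a.
Proof. by case=> // [[->]]. Qed.
Lemma touch_inr (e : A * (P + A)) q : touch e (inr q) -> e.2 = q.
Proof. by case=> // [[->]]. Qed.

Lemma sandwich M Y t0 : is_max_matching (Hs t0) (Mle M t0.+1) ->
  (forall v, OU t0 v -> exists2 g, g \in Y & fr g.1 g.2 <= t0.+1 /\ touch g v) ->
  (forall g, g \in Y -> fr g.1 g.2 <= t0.+1 -> ~ joins_OOU (Hs t0) g.1 g.2) ->
  #|Mle M t0.+1| <= #|Mle Y t0.+1|.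
Proof.
move=> hmax hcov hnon.
apply: leq_trans (K0_up (proj1 hmax)) _.
apply: K0_low.
- move=> a; rewrite inE => /asbP hOU.
  have [g hg [hf tg]] := hcov _ hOU.
  by exists g; [rewrite inMle hg hf | exact: touch_inl].
- move=> q; rewrite inE => /asbP hO.
  have [g hg [hf tg]] := hcov (inr q) (or_introl hO).
  by exists g; [rewrite inMle hg hf | exact: touch_inr].
- move=> g; rewrite inMle => /andP [hg hf]; exact: hnon.
Qed.

Lemma F1 M : rank_maximal r rk M -> forall t, t <= r -> forall t0, t0 <= t ->
  is_max_matching (Hs t0) (Mle M t0.+1).
Proof.
move=> hM; have hMm := rm_match hM; have hMt := matchingT hMm.
have hpos := match_pos hMm.
elim => [|t IH] ht t0.
- rewrite leqn0 => /eqP ->.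
  have hm : is_matching (Hs 0) (Mle M 1).
    apply: matchingI; last exact: tmatch_sub hMt (Mle_sub _ _).
    move=> e; rewrite inMle => /andP [he hf]; apply/(Hs0 r rk).
    by have := hpos e he; move: hf => h1 h2; apply/eqP; rewrite eqn_leq h1.
  split => // X hX; rewrite leqNgt; apply/negP => hlt.
  have hXG : is_matching (Gedge r rk) X.
    case: hX => h1 h2 h3; split => // e /h1 /Hs_Gedge; exact.
  have eX : Mle X 1 = X.
    apply/setP => e; rewrite inMle; case he: (e \in X) => //=.
    by case: hX => h1 _ _; move/(Hs0 r rk): (h1 e he) => ->.
  apply: (no_better hM hXG (n:=1)) => //.
  + move=> s; rewrite leq_eqVlt => /orP [/eqP ->|]; first by rewrite eX ltnW.
    by rewrite ltnS leqn0 => /eqP ->; rewrite (Mle0 hpos).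
  + by rewrite eX.
- have IH' := IH (ltnW ht).
  rewrite leq_eqVlt => /orP [/eqP ->|]; last by rewrite ltnS; exact: IH'.
  have hcovM : forall t0 v, t0 <= t -> OU t0 v ->
      exists2 f, f \in M & fr f.1 f.2 <= t0.+1 /\ touch f v.
    by move=> t1 v ht1; apply: covM; exact: IH' t1 ht1.
  have hm : is_matching (Hs t.+1) (Mle M t.+2).
    apply: matchingI; last exact: tmatch_sub hMt (Mle_sub _ _).
    move=> e; rewrite inMle => /andP [he hf]; apply/HsS.
    move: hf; rewrite leq_eqVlt => /orP [/eqP hfe|hf].
      right; split => //; apply: ALc => t1 ht1 [hlt hOU].
      have [v [tv hOUv]] : exists v, touch e v /\ OU t1 v.
        by case: hOU => h; [exists (inl e.1); split => //; left|exists (inr e.2); split => //; right].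
      have [f hf [hff tf]] := hcovM t1 v ht1 hOUv.
      have efe := hMt e f v he hf tv tf; subst f.
      by move: hlt; rewrite ltnNge hff.
    left; have hmax := IH' t (leqnn t).
    have heM : e \in Mle M t.+1 by rewrite inMle he.
    split; first by case: (proj1 hmax) => h _ _; exact: h _ heM.
    exact: max_nonOOU hmax heM.
  split => // X hX; rewrite leqNgt; apply/negP => hlt.
  have [Z0 hZ0] := exists_max (Hs t.+1).
  have [Z [hZ hcZ]] := cover_max hm hZ0.
  have hXZ : #|X| <= #|Z| := leq_trans (proj2 hZ0 X hX) (proj2 hZ Z0 (proj1 hZ0)).
  have hZG : is_matching (Gedge r rk) Z.
    case: (proj1 hZ) => h1 h2 h3; split => // e /h1 /Hs_Gedge; exact.
  have hZt := matchingT (proj1 hZ).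
  have eZ : Mle Z t.+2 = Z.
    apply/setP => e; rewrite inMle; case he: (e \in Z) => //=.
    by case: (proj1 hZ) => h1 _ _; case/andP: (ST1 (h1 e he)).
  apply: (no_better hM hZG (n:=t.+2)) => //.
  + move=> s; case: s => [_|s hs]; first by rewrite (Mle0 hpos).
    move: hs; rewrite ltnS leq_eqVlt => /orP [/eqP ->|hs].
      by rewrite eZ; apply: leq_trans (ltnW hlt) hXZ.
    rewrite ltnS in hs.
    apply: sandwich; first exact: IH' s hs.
    * move=> v hOU.
      have [f hf [hff tf]] := hcovM s v hs hOU.
      have hfm : ~ unmatched (Mle M t.+2) v.
        apply/matchedE; exists f => //; rewrite inMle hf; apply: leq_trans hff _.
        by apply: leq_trans hs _.
      have [g hg tg] := proj1 (matchedE _ _) (hcZ v hfm).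
      exists g => //; split => //.
      have hgH : Hs t.+1 g.1 g.2 by case: (proj1 hZ) => h _ _; exact: h _ hg.
      apply: (ST3 hgH (t0:=s)); first by rewrite ltnS.
      by case: tg => hv; subst v; [left|right].
    * move=> g hg hgf.
      have hgH : Hs t.+1 g.1 g.2 by case: (proj1 hZ) => h _ _; exact: h _ hg.
      by case: (ST2 (t0:=s) _ hgH hgf); first by rewrite ltnS.
  + by rewrite eZ; apply: leq_trans hlt hXZ.
Qed.

End F1.
Unset Implicit Arguments. Set Strict Implicit.


Lemma sum_lt_min n m : \sum_(s < n) (s < m : nat) = minn n m.
Proof.
elim: n => [|n IH]; first by rewrite big_ord0 min0n.
rewrite big_ord_recr /= IH; clear; case: (ltnP n m) => h /=; lia.
Qed.

Section Tot.
Context {A P : finType} (r : nat) (rk : A -> P -> nat).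
Local Notation fr a q := (frk r rk a q).

Definition Mgt (X : {set A * (P + A)}) s := [set e in X | s < fr e.1 e.2].

Lemma total_rank (X : {set A * (P + A)}) : (forall e, e \in X -> fr e.1 e.2 <= r.+1) ->
  \sum_(e in X) fr e.1 e.2 = \sum_(s < r.+1) #|Mgt X s|.
Proof.
move=> hX.
have -> : \sum_(e in X) fr e.1 e.2 = \sum_(e in X) \sum_(s < r.+1) (s < fr e.1 e.2 : nat).
  apply: eq_bigr => e he; rewrite sum_lt_min; apply/esym/minn_idPr; exact: hX.
transitivity (\sum_(s < r.+1) \sum_(e in X) (s < fr e.1 e.2 : nat)); first exact: exchange_big.
apply: eq_bigr => s _.
rewrite -sum1_card [RHS]big_mkcond [LHS]big_mkcond /=; apply: eq_bigr => e _.
by rewrite inE; case: (e \in X); case: (s < _).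
Qed.

Lemma Mgt_card (X : {set A * (P + A)}) s : #|Mle r rk X s| + #|Mgt X s| = #|X|.
Proof.
have e1 : X :&: Mle r rk X s = Mle r rk X s.
  apply/setP => e; rewrite !inE; by case: (e \in X).
have e2 : X :\: Mle r rk X s = Mgt X s.
  apply/setP => e; rewrite !inE ltnNge; by case: (e \in X); case: (_ <= _).
by have := cardsID (Mle r rk X s) X; rewrite e1 e2.
Qed.

End Tot.
Unset Implicit Arguments. Set Strict Implicit.


Section Main.
Context {A P : finType} (r : nat) (rk : A -> P -> nat).
Hypothesis hrk : forall a p, rk a p <= r.
Variables (M : {set A * (P + A)}) (k : nat) (p : 'I_k.+1 -> (P + A)%type) (a : 'I_k.+1 -> A).
Hypotheses (hM : rank_maximal r rk M) (hp : injective p)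
  (hC : forall i, sw_edge r rk M (a i) (p i) (p (ordS i))).
Local Notation fr a q := (frk r rk a q).
Local Notation Hs t := (irving_stage r rk t).1.

Definition Old := [set (a i, p i) | i : 'I_k.+1].
Definition New := [set (a i, p (ordS i)) | i : 'I_k.+1].
Definition M' := (M :\: Old) :|: New.

Lemma fr_le x q : fr x q <= r.+1.
Proof. case: q => [q|b] /=; first exact: leq_trans (hrk x q) (leqnSn r). by case: (x == b). Qed.

Lemma hOld i : (a i, p i) \in M.
Proof. by case: (hC i). Qed.
Lemma hNewR i : reduced_graph r rk (a i) (p (ordS i)).
Proof. by case: (hC i). Qed.

Let hMm := rm_match hM.
Let hMt := matchingT hMm.

Lemma a_inj : injective a.
Proof.
move=> i j hij; apply: hp.
have := hMt _ _ (inl (a i)) (hOld i) (hOld j) (or_introl erefl) (or_introl (congr1 inl hij)).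
by case.
Qed.

Lemma inOld e : e \in Old -> exists i, e = (a i, p i).
Proof. by case/imsetP => i _ ->; exists i. Qed.
Lemma inNew e : e \in New -> exists i, e = (a i, p (ordS i)).
Proof. by case/imsetP => i _ ->; exists i. Qed.

Lemma Old_sub : Old \subset M.
Proof. by apply/subsetP => e /inOld [i ->]; exact: hOld. Qed.

Lemma new_touch i z : touch (a i, p (ordS i)) z -> exists2 f, f \in Old & touch f z.
Proof.
case=> /= ->.
- by exists (a i, p i); [apply/imsetP; exists i | left].
- by exists (a (ordS i), p (ordS i)); [apply/imsetP; exists (ordS i) | right].
Qed.

Lemma MO_New e : e \in M :\: Old -> e \in New -> False.
Proof.
rewrite in_setD => /andP [hnO heM] /inNew [i he].
have [f hf tf] := new_touch i (inl (a i)) (or_introl erefl).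
have te : touch e (inl (a i)) by rewrite he; left.
have hef := hMt _ _ _ heM (subsetP Old_sub f hf) te tf.
by move: hnO; rewrite hef hf.
Qed.

Lemma M'_match : is_matching (Gedge r rk) M'.
Proof.
apply: matchingI.
  move=> e; rewrite in_setU => /orP [|/inNew [i ->]].
    by rewrite in_setD => /andP [_ he]; case: hMm => h _ _; exact: h.
  by case: (proj1 (redE r rk (a i) (p (ordS i))) (hNewR i)) => h _; exact: Hs_Gedge h.
have key : forall e f z, e \in M :\: Old -> f \in New -> touch e z -> touch f z -> False.
  move=> e f z he /inNew [i ->] te tf.
  have [g hg tg] := new_touch _ _ tf.
  move: he; rewrite in_setD => /andP [hnO heM].
  have := hMt _ _ _ heM (subsetP Old_sub g hg) te tg => heg.
  by rewrite heg hg in hnO.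
move=> e f z; rewrite !in_setU => /orP [he|he] /orP [hf|hf] te tf.
- by move: he hf; rewrite !in_setD => /andP [_ he] /andP [_ hf]; exact: hMt _ _ _ he hf te tf.
- by case: (key _ _ _ he hf te tf).
- by case: (key _ _ _ hf he tf te).
- move: he hf => /inNew [i ei] /inNew [j ej]; subst e f.
  case: te => /= hz; subst z; case: tf => /= h //.
  + by case: h => /a_inj ->.
  + by case: h => /hp/ordS_inj ->.
Qed.

Lemma covT f v : f \in M -> touch f v -> exists2 g, g \in M' & touch g v.
Proof.
move=> hf tf; case: (boolP (f \in Old)) => hfO.
- have [i ei] := inOld _ hfO; subst f.
  case: tf => /= ->.
  + exists (a i, p (ordS i)); last by left.
    by rewrite in_setU; apply/orP; right; apply/imsetP; exists i.
  + exists (a (ord_pred i), p (ordS (ord_pred i))); last by right; rewrite /= ord_predK.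
    by rewrite in_setU; apply/orP; right; apply/imsetP; exists (ord_pred i).
- by exists f => //; rewrite in_setU in_setD hfO hf.
Qed.

Lemma c_le t : t <= r -> #|Mle r rk M t.+1| <= #|Mle r rk M' t.+1|.
Proof.
move=> ht; have hmax := F1 hM ht (leqnn t).
apply: sandwich; first exact: hmax.
- move=> v hOU.
  have [f hf [hff tf]] := covM hmax hOU.
  have [g hg tg] := covT _ _ hf tf.
  exists g => //; split => //.
  move: hg; rewrite in_setU => /orP [|/inNew [i eg]].
    by rewrite in_setD => /andP [_ hgM]; rewrite (hMt _ _ _ hgM hf tg tf).
  subst g; apply: (ST3r (hNewR i) ht).
  by case: tg => /= hv; subst v; [left|right].
- move=> g; rewrite in_setU => /orP [hg|/inNew [i eg]] hgf.
    move: hg; rewrite in_setD => /andP [_ hgM]; apply: (max_nonOOU hmax); by rewrite inMle hgM.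
  by subst g; have [_ h] := ST2r (hNewR i) ht hgf.
Qed.

Lemma c_all s : s <= r.+1 -> #|Mle r rk M s| <= #|Mle r rk M' s|.
Proof.
case: s => [|s] hs; first by rewrite (Mle0 (match_pos hMm)).
exact: c_le.
Qed.

Lemma c_eq s : s <= r.+1 -> #|Mle r rk M s| = #|Mle r rk M' s|.
Proof.
move=> hs; apply/eqP; rewrite eqn_leq c_all //= leqNgt; apply/negP => hlt.
apply: (no_better hM M'_match hs) => // s' hs'; apply: c_all; exact: leq_trans hs' hs.
Qed.

Lemma Mle_full X : Mle r rk X r.+1 = X.
Proof. by apply/setP => e; rewrite inMle fr_le andbT. Qed.

Lemma Mgt_eq s : s <= r.+1 -> #|Mgt r rk M s| = #|Mgt r rk M' s|.
Proof.
move=> hs; have e1 := Mgt_card r rk M s; have e2 := Mgt_card r rk M' s.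
have e3 := c_eq s hs; have e4 := c_eq r.+1 (leqnn r.+1); rewrite !Mle_full in e4.
by apply/eqP; rewrite -(eqn_add2l #|Mle r rk M s|) e1 e3 e2 e4.
Qed.

Lemma total_eq : \sum_(e in M) fr e.1 e.2 = \sum_(e in M') fr e.1 e.2.
Proof.
rewrite !total_rank; try by move=> e _; exact: fr_le.
apply: eq_bigr => s _; apply: Mgt_eq; exact: ltnW (ltn_ord s).
Qed.

Lemma sums_eq : \sum_i fr (a i) (p (ordS i)) = \sum_i fr (a i) (p i).
Proof.
have hO : \sum_(e in Old) fr e.1 e.2 = \sum_i fr (a i) (p i).
  rewrite big_imset /=; first by apply: eq_bigl => i; rewrite inE.
  by move=> i j _ _ [_ /hp].
have hN : \sum_(e in New) fr e.1 e.2 = \sum_i fr (a i) (p (ordS i)).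
  rewrite big_imset /=; first by apply: eq_bigl => i; rewrite inE.
  by move=> i j _ _ [_ /hp /ordS_inj].
have := total_eq.
rewrite (big_setID Old) [X in _ = X](big_setID New).
have -> : M :&: Old = Old by apply/setIidPr; exact: Old_sub.
have -> : M' :&: New = New by apply/setIidPr; apply/subsetP => e he; rewrite in_setU he orbT.
have -> : M' :\: New = M :\: Old.
  apply/setP => e; rewrite in_setD in_setU.
  case hN': (e \in New); case hM': (e \in M :\: Old) => //=.
  by case: (MO_New _ hM' hN').
rewrite hO hN => h; apply/eqP; rewrite -(eqn_add2r (\sum_(i in M :\: Old) fr i.1 i.2)) -h //.
Qed.

End Main.
Unset Implicit Arguments. Set Strict Implicit.

Local Open Scope ring_scope.

Theorem lemma3 (A P : finType) (r : nat) (rk : A -> P -> nat)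
  (hrk : forall a p, (rk a p <= r)%N)
  (M : {set A * (P + A)%type}) (hM : rank_maximal r rk M)
  (k : nat) (p : 'I_k.+1 -> (P + A)%type) (a : 'I_k.+1 -> A)
  (hp : injective p)
  (hC : forall i, sw_edge r rk M (a i) (p i) (p (ordS i))) :
  \sum_(i < k.+1) sw_weight r rk (a i) (p i) (p (ordS i)) = 0.
Proof.
rewrite /sw_weight sumrB.
have h := sums_eq r rk hrk M k p a hM hp hC.
have hz : forall F : 'I_k.+1 -> nat, \sum_(i < k.+1) (F i)%:Z = (\sum_(i < k.+1) F i)%N%:Z.
  by move=> F; rewrite (big_morph Posz PoszD (erefl 0%:Z)).
by rewrite !hz h subrr.
Qed.
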